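(* Let $S$ be an inverse semigroup (with zero), let $\beta\colon S\to\mathsf{B}(S)$ be its Booleanization, let $I$ be the Cuntz-Krieger ideal of $\mathsf{B}(S)$, let $\mathsf{T}(S)=\mathsf{B}(S)/\varepsilon_I$ be the Exel completion of $S$, and let $\tau=\nu\circ\beta\colon S\to\mathsf{T}(S)$, where $\nu\colon\mathsf{B}(S)\to\mathsf{T}(S)$ is the natural quotient morphism. Then $\tau$ is a cover-to-join map, and it is universal among cover-to-join maps from $S$ to Boolean inverse semigroups: for every cover-to-join map $\theta\colon S\to T$ into a Boolean inverse semigroup $T$ there is a unique morphism of Boolean inverse semigroups $\theta'\colon\mathsf{T}(S)\to T$ such that $\theta'\circ\tau=\theta$.
   Context: All inverse semigroups have a zero and all homomorphisms preserve the zero; no identity element is assumed. For $s$ in an inverse semigroup, $\mathbf{d}(s)=s^{-1}s$, $\mathbf{r}(s)=ss^{-1}$; the natural partial order is $s\le t$ iff $s=t\,s^{-1}s$; $a^{\downarrow}=\{s: s\le a\}$. Elements $s,t$ are compatible ($s\sim t$) if $s^{-1}t$ and $st^{-1}$ are idempotents. An inverse semigroup is distributive if every compatible pair has a join and multiplication distributes over such joins; it is Boolean if moreover its semilattice of idempotents is a generalized Boolean algebra (a distributive lattice with bottom in which every principal order ideal is a unital Boolean algebra). In a Boolean inverse semigroup, if $b\le a$ then $a\setminus b$ denotes $a(\mathbf{d}(a)\setminus\mathbf{d}(b))$. A morphism of Boolean inverse semigroups is a zero-preserving homomorphism that preserves joins of compatible pairs. An additive ideal of a Boolean inverse semigroup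 is a semigroup ideal closed under joins of compatible pairs; for an additive ideal $I$ of $B$, $\varepsilon_I$ is the relation $(a,b)\in\varepsilon_I$ iff there is $c\le a,b$ with $a\setminus c,\ b\setminus c\in I$; it is a congruence and $B/\varepsilon_I$ is a Boolean inverse semigroup. A finite subset $\{a_1,\dots,a_m\}\subseteq a^{\downarrow}$ is a cover of $a$ if for every $0\ne x\le a$ there is $i$ with $x\wedge a_i\ne 0$ (elements of a principal order ideal are pairwise compatible and so have meets). A cover-to-join map is a homomorphism $\theta\colon S\to T$ into a Boolean inverse semigroup $T$ such that whenever $\{a_1,\dots,a_m\}$ is a cover of $a$, we have $\theta(a)=\theta(a_1)\vee\dots\vee\theta(a_m)$. The Booleanization of $S$ is a Boolean inverse semigroup $\mathsf{B}(S)$ with an injective homomorphism $\beta\colon S\to\mathsf{B}(S)$ such that for every homomorphism $\theta\colon S\to T$ into a Boolean inverse semigroup there is a unique morphism $\theta'\colon\mathsf{B}(S)\to T$ with $\theta'\beta=\theta$. The Cuntz-Krieger ideal $I$ of $\mathsf{B}(S)$ is the smallest additive ideal containing all elements $\beta(a)\setminus(\beta(a_1)\vee\dots\vee\beta(a_m))$ where $\{a_1,\dots,a_m\}$ is a cover of $a$ in $S$. *)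

(* Defs.v *)
From Stdlib Require Import List.

Record invsg := InvSg {
  car :> Type;
  mul : car -> car -> car;
  inv : car -> car;
  zero : car;
  mulA : forall a b c, mul a (mul b c) = mul (mul a b) c;
  mul0s : forall a, mul zero a = zero;
  muls0 : forall a, mul a zero = zero;
  inv_l : forall a, mul (mul a (inv a)) a = a;
  inv_r : forall a, mul (mul (inv a) a) (inv a) = inv a;
  inv_uniq : forall a b, mul (mul a b) a = a -> mul (mul b a) b = b -> b = inv a
}.

Arguments mul {i} _ _.
Arguments inv {i} _.
Arguments zero {i}.

Section Defs.
Context {S : invsg}.

Definition idem (e : S) : Prop := mul e e = e.
Definition dom (a : S) : S := mul (inv a) a.
Definition leo (s t : S) : Prop := s = mul t (dom s).
Definition compat (s t : S) : Prop := idem (mul (inv s) t) /\ idem (mul s (inv t)).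

Definition is_lub (P : S -> Prop) (j : S) : Prop :=
  (forall x, P x -> leo x j) /\ (forall u, (forall x, P x -> leo x u) -> leo j u).
Definition is_join (j a b : S) : Prop := is_lub (fun x => x = a \/ x = b) j.
Definition is_meet (m a b : S) : Prop :=
  (leo m a /\ leo m b) /\ (forall u, leo u a -> leo u b -> leo u m).

Definition distributive : Prop :=
  (forall a b, compat a b -> exists j, is_join j a b) /\
  (forall a b j c, compat a b -> is_join j a b ->
      is_join (mul c j) (mul c a) (mul c b) /\ is_join (mul j c) (mul a c) (mul b c)).

Definition idem_join (j e f : S) : Prop :=
  idem j /\ leo e j /\ leo f j /\ (forall u, idem u -> leo e u -> leo f u -> leo j u).

(* E(S) is a generalized Boolean algebra: a lattice (meet = product, bottom 0),
   distributive, and every principal ideal e^down is a (unital) Boolean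
   algebra, i.e. relatively complemented. *)
Definition gen_boolean_idem : Prop :=
  (forall e f, idem e -> idem f -> exists j, idem_join j e f) /\
  (forall e f g j, idem e -> idem f -> idem g -> idem_join j f g ->
      idem_join (mul e j) (mul e f) (mul e g)) /\
  (forall e f, idem e -> idem f -> leo f e ->
      exists g, idem g /\ leo g e /\ mul f g = zero /\ idem_join e f g).

Definition boolean : Prop := distributive /\ gen_boolean_idem.

(* x = a \ b := a (d(a) \ d(b)), with d(a)\d(b) the complement of d(b) in d(a)^down *)
Definition is_diff (x a b : S) : Prop :=
  exists g, idem g /\ leo g (dom a) /\ mul (dom b) g = zero /\
            idem_join (dom a) (dom b) g /\ x = mul a g.

Definition additive_ideal (J : S -> Prop) : Prop :=
  (forall a s, J a -> J (mul s a) /\ J (mul a s)) /\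
  (forall a b j, J a -> J b -> compat a b -> is_join j a b -> J j).

Definition cover (a : S) (l : list S) : Prop :=
  (forall x, In x l -> leo x a) /\
  (forall x, x <> zero -> leo x a ->
     exists y, In y l /\ exists m, is_meet m x y /\ m <> zero).

Definition eps (I : S -> Prop) (a b : S) : Prop :=
  exists c x y, leo c a /\ leo c b /\ is_diff x a c /\ is_diff y b c /\ I x /\ I y.

End Defs.

Arguments boolean : clear implicits.

Definition is_hom {S T : invsg} (f : S -> T) : Prop :=
  (forall a b, f (mul a b) = mul (f a) (f b)) /\ f zero = zero.

Definition is_morphism {S T : invsg} (f : S -> T) : Prop :=
  is_hom f /\ (forall a b j, compat a b -> is_join j a b -> is_join (f j) (f a) (f b)).

Definition cover_to_join {S T : invsg} (theta : S -> T) : Prop :=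
  is_hom theta /\
  (forall (a : S) l, cover a l -> is_lub (fun y => exists z, In z l /\ y = theta z) (theta a)).

Definition unique_factor {S B T : invsg} (f : S -> B) (theta : S -> T) : Prop :=
  exists theta' : B -> T, is_morphism theta' /\ (forall s, theta' (f s) = theta s) /\
    (forall theta'' : B -> T, is_morphism theta'' -> (forall s, theta'' (f s) = theta s) ->
       forall x, theta'' x = theta' x).

Definition is_booleanization {S B : invsg} (beta : S -> B) : Prop :=
  boolean B /\ is_hom beta /\ (forall s t, beta s = beta t -> s = t) /\
  (forall T : invsg, boolean T -> forall theta : S -> T, is_hom theta ->
     unique_factor beta theta).

Definition CK_gen {S B : invsg} (beta : S -> B) (x : B) : Prop :=
  exists (a : S) (l : list S) (j : B), cover a l /\
    is_lub (fun y => exists z, In z l /\ y = beta z) j /\ is_diff x (beta a) j.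

Definition CK_ideal {S B : invsg} (beta : S -> B) (x : B) : Prop :=
  forall J : B -> Prop, additive_ideal J -> (forall y, CK_gen beta y -> J y) -> J x.

(* Main.v *)
Require Import Defs.
From Stdlib Require Import List.

Local Notation "a ** b" := (mul a b) (at level 40, left associativity).

Arguments mulA {i} a b c.
Arguments mul0s {i} a.
Arguments muls0 {i} a.
Arguments inv_l {i} a.
Arguments inv_r {i} a.
Arguments inv_uniq {i} a b _ _.

Ltac assoc := repeat rewrite <- mulA.

Section Gen.
Context {S : invsg}.
Implicit Types a b c e f s t u x y : S.

Lemma inv_inv a : inv (inv a) = a.
Proof. symmetry. apply inv_uniq. apply inv_r. apply inv_l. Qed.

Lemma idem_inv e : idem e -> inv e = e.
Proof. intro H. symmetry. apply inv_uniq; unfold idem in H; rewrite !H; reflexivity. Qed.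

Lemma idem_ll e z : idem e -> e ** (e ** z) = e ** z.
Proof. intro H. rewrite mulA, H. reflexivity. Qed.

Lemma idem_mul e f : idem e -> idem f -> idem (e ** f).
Proof.
  intros He Hf.
  set (x := inv (e ** f)).
  assert (hx1 : e ** (f ** (x ** (e ** f))) = e ** f).
  { pose proof (inv_l (e ** f)) as H. fold x in H. assoc; repeat rewrite <- mulA in H. exact H. }
  assert (hx2 : x ** (e ** (f ** x)) = x).
  { pose proof (inv_r (e ** f)) as H. fold x in H. assoc; repeat rewrite <- mulA in H. exact H. }
  assert (hy : f ** x ** e = x).
  { unfold x at 2. apply inv_uniq.
    - assoc. rewrite (idem_ll f), (idem_ll e) by assumption. exact hx1.
    - assoc. rewrite (idem_ll e), (idem_ll f) by assumption.
      assert (x ** (e ** (f ** (x ** e))) = x ** e) as ->.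
      { rewrite (mulA f x e), (mulA e), (mulA x). assoc. 
        transitivity ((x ** (e ** (f ** x))) ** e). assoc; reflexivity. rewrite hx2. reflexivity. }
      reflexivity. }
  assert (hxx : idem x).
  { unfold idem. transitivity ((f ** x ** e) ** (f ** x ** e)). rewrite hy; reflexivity.
    assoc.
    assert (x ** (e ** (f ** (x ** e))) = x ** e) as ->.
    { transitivity ((x ** (e ** (f ** x))) ** e). assoc; reflexivity. rewrite hx2. reflexivity. }
    rewrite mulA. exact hy. }
  pose proof (idem_inv x hxx) as H. unfold x in H at 1. rewrite inv_inv in H.
  unfold idem. rewrite H. exact hxx.
Qed.

Lemma idem_comm e f : idem e -> idem f -> e ** f = f ** e.
Proof.
  intros He Hf.
  pose proof (idem_mul e f He Hf) as Hef. pose proof (idem_mul f e Hf He) as Hfe.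
  rewrite <- (idem_inv _ Hef). symmetry. apply inv_uniq.
  - assoc. rewrite (idem_ll f), (idem_ll e) by assumption.
    unfold idem in Hef. rewrite mulA. exact Hef.
  - assoc. rewrite (idem_ll e), (idem_ll f) by assumption.
    unfold idem in Hfe. rewrite mulA. exact Hfe.
Qed.


Lemma dom_idem a : idem (dom a).
Proof. unfold idem, dom. rewrite (mulA _ (inv a)), inv_r. reflexivity. Qed.

Lemma ran_idem a : idem (a ** inv a).
Proof. pose proof (dom_idem (inv a)) as H. unfold dom in H. rewrite inv_inv in H. exact H. Qed.

Lemma inv_l' a z : a ** (inv a ** (a ** z)) = a ** z.
Proof. rewrite !mulA, inv_l. reflexivity. Qed.
Lemma inv_r' a z : inv a ** (a ** (inv a ** z)) = inv a ** z.
Proof. rewrite !mulA, inv_r. reflexivity. Qed.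
Lemma inv_l0 a : a ** (inv a ** a) = a.
Proof. rewrite mulA. apply inv_l. Qed.

Lemma inv_mul a b : inv (a ** b) = inv b ** inv a.
Proof.
  symmetry. apply inv_uniq.
  - transitivity (a ** ((b ** inv b) ** (inv a ** a)) ** b). assoc; reflexivity.
    rewrite (idem_comm (b ** inv b) (inv a ** a)) by (apply ran_idem || apply dom_idem).
    assoc. rewrite inv_l'. rewrite inv_l0. reflexivity.
  - transitivity (inv b ** ((inv a ** a) ** (b ** inv b)) ** inv a). assoc; reflexivity.
    rewrite (idem_comm (inv a ** a) (b ** inv b)) by (apply ran_idem || apply dom_idem).
    assoc. rewrite (mulA (inv a) a), inv_r. rewrite !mulA, inv_r. reflexivity.
Qed.

Lemma idem_ran_dom a : idem a -> dom a = a.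
Proof. intro H. unfold dom. rewrite idem_inv by exact H. exact H. Qed.

Lemma idem_zero : idem (@zero S).
Proof. unfold idem. apply mul0s. Qed.

Lemma dom_zero : dom (@zero S) = zero.
Proof. unfold dom. apply muls0. Qed.

Lemma dom_mul_idem t e : idem e -> dom (t ** e) = dom t ** e.
Proof.
  intro He. unfold dom. rewrite inv_mul, (idem_inv e He).
  transitivity (e ** (inv t ** t) ** e). assoc; reflexivity.
  rewrite (idem_comm e (inv t ** t)) by (apply dom_idem || exact He).
  assoc. rewrite He. reflexivity.
Qed.

Lemma leo_refl s : leo s s.
Proof. unfold leo, dom. symmetry. apply inv_l0. Qed.

Lemma leo_idem_r t e : idem e -> leo (t ** e) t.
Proof.
  intro He. unfold leo. rewrite dom_mul_idem by exact He. rewrite mulA.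
  unfold dom. rewrite (mulA t), inv_l. reflexivity.
Qed.

Lemma leo_ex s t : leo s t <-> exists e, idem e /\ s = t ** e.
Proof.
  split.
  - intro H. exists (dom s). split. apply dom_idem. exact H.
  - intros [e [He ->]]. apply leo_idem_r; exact He.
Qed.

Lemma leo_dom s t : leo s t -> dom s = dom t ** dom s.
Proof.
  intros H. apply leo_ex in H. destruct H as [e [He ->]].
  rewrite dom_mul_idem by exact He. rewrite mulA, (dom_idem t). reflexivity.
Qed.

Lemma leo_dom' s t : leo s t -> dom s = dom s ** dom t.
Proof.
  intros H. rewrite (leo_dom s t H) at 1. apply idem_comm; apply dom_idem.
Qed.

Lemma leo_dom_leo s t : leo s t -> leo (dom s) (dom t).
Proof.
  intro H. apply leo_ex. exists (dom s). split. apply dom_idem. apply leo_dom; exact H.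
Qed.

Lemma leo_trans s t u : leo s t -> leo t u -> leo s u.
Proof.
  intros H1 H2. apply leo_ex in H1. apply leo_ex in H2.
  destruct H1 as [e1 [He1 ->]]. destruct H2 as [e2 [He2 ->]].
  apply leo_ex. exists (e2 ** e1). split. apply idem_mul; assumption. symmetry; apply mulA.
Qed.

Lemma leo_antisym s t : leo s t -> leo t s -> s = t.
Proof.
  intros H1 H2.
  assert (dom s = dom t).
  { rewrite (leo_dom s t H1). rewrite <- (leo_dom' t s H2). reflexivity. }
  rewrite H1, H. symmetry. apply leo_refl.
Qed.

Lemma conj_idem a e : idem e -> idem (a ** e ** inv a).
Proof.
  intro He. unfold idem.
  transitivity (a ** (e ** (inv a ** a)) ** e ** inv a). assoc; reflexivity.
  rewrite (idem_comm e (inv a ** a)) by (apply dom_idem || exact He).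
  assoc. rewrite inv_l'. rewrite (idem_ll e) by exact He. reflexivity.
Qed.

Lemma leo_mul_l s t u : leo s t -> leo (u ** s) (u ** t).
Proof.
  intros H. apply leo_ex in H. destruct H as [e [He ->]]. apply leo_ex.
  exists e. split. exact He. apply mulA.
Qed.

Lemma leo_mul_r s t u : leo s t -> leo (s ** u) (t ** u).
Proof.
  intros H. apply leo_ex in H. destruct H as [e [He ->]]. apply leo_ex.
  exists (inv u ** e ** u). split.
  - pose proof (conj_idem (inv u) e He) as H. rewrite inv_inv in H. exact H.
  - assert (u ** (inv u ** e ** u) = e ** u).
    { transitivity ((u ** inv u) ** e ** u). assoc; reflexivity.
      rewrite (idem_comm (u ** inv u) e) by (apply ran_idem || exact He).
      assoc. rewrite inv_l0. reflexivity. }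
    rewrite <- (mulA t u), H, mulA. reflexivity.
Qed.

Lemma leo_zero a : leo zero a.
Proof. unfold leo. rewrite dom_zero, muls0. reflexivity. Qed.

Lemma leo_zero_r x : leo x zero -> x = zero.
Proof. unfold leo. rewrite mul0s. auto. Qed.

Lemma leo_idem_idem e f : idem f -> leo e f -> idem e.
Proof. intros Hf H. rewrite H. apply idem_mul. exact Hf. apply dom_idem. Qed.

Lemma leo_idem_eq e f : idem f -> leo e f -> e = f ** e.
Proof.
  intros Hf H. pose proof (leo_idem_idem e f Hf H) as He.
  unfold leo in H. rewrite H at 1. rewrite idem_ran_dom by exact He. reflexivity.
Qed.

Lemma leo_idem_of e f : idem f -> idem e -> e = f ** e -> leo e f.
Proof. intros Hf He H. unfold leo. rewrite idem_ran_dom by exact He. exact H. Qed.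

Lemma compat_below s t a : leo s a -> leo t a -> compat s t.
Proof.
  intros H1 H2. apply leo_ex in H1. apply leo_ex in H2.
  destruct H1 as [e1 [He1 ->]]. destruct H2 as [e2 [He2 ->]].
  split.
  - rewrite inv_mul, (idem_inv e1 He1).
    replace (e1 ** inv a ** (a ** e2)) with (e1 ** (inv a ** a) ** e2) by (assoc; reflexivity).
    apply idem_mul; [apply idem_mul|]; auto; apply dom_idem.
  - rewrite inv_mul.
    replace (a ** e1 ** (inv e2 ** inv a)) with (a ** (e1 ** e2) ** inv a) by (rewrite (idem_inv e2 He2); assoc; reflexivity).
    apply conj_idem. apply idem_mul; auto.
Qed.

Lemma compat_idem e f : idem e -> idem f -> compat e f.
Proof.
  intros He Hf. split.
  - rewrite (idem_inv e He). apply idem_mul; auto.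
  - rewrite (idem_inv f Hf). apply idem_mul; auto.
Qed.

Lemma lub_unique (P : S -> Prop) j j' : is_lub P j -> is_lub P j' -> j = j'.
Proof.
  intros [H1 H2] [H1' H2']. apply leo_antisym; auto.
Qed.

Lemma lub_ext (P Q : S -> Prop) j : (forall x, P x <-> Q x) -> is_lub P j -> is_lub Q j.
Proof.
  intros E [H1 H2]. split.
  - intros x Hx. apply H1, E, Hx.
  - intros u Hu. apply H2. intros x Hx. apply Hu, E, Hx.
Qed.

Lemma join_0l z y : is_join z zero y -> y = z.
Proof.
  intros [H1 H2]. apply leo_antisym.
  - apply H1; auto.
  - apply H2. intros x [->| ->]. apply leo_zero. apply leo_refl.
Qed.

Lemma join_ub1 j a b : is_join j a b -> leo a j.
Proof. intros [H _]. apply H; auto. Qed.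
Lemma join_ub2 j a b : is_join j a b -> leo b j.
Proof. intros [H _]. apply H; auto. Qed.
Lemma join_least j a b u : is_join j a b -> leo a u -> leo b u -> leo j u.
Proof. intros [_ H] Ha Hb. apply H. intros x [->| ->]; auto. Qed.

End Gen.

Section Hom.
Context {S T : invsg} (f : S -> T) (hf : is_hom f).

Lemma hom_mul a b : f (a ** b) = f a ** f b.
Proof. apply hf. Qed.
Lemma hom_zero : f zero = zero.
Proof. apply hf. Qed.

Lemma hom_inv a : f (inv a) = inv (f a).
Proof.
  apply inv_uniq; rewrite <- !hom_mul. rewrite inv_l. reflexivity. rewrite inv_r. reflexivity.
Qed.

Lemma hom_idem e : idem e -> idem (f e).
Proof. unfold idem. intro H. rewrite <- hom_mul, H. reflexivity. Qed.

Lemma hom_dom a : f (dom a) = dom (f a).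
Proof. unfold dom. rewrite hom_mul, hom_inv. reflexivity. Qed.

Lemma hom_leo s t : leo s t -> leo (f s) (f t).
Proof. unfold leo. intro H. rewrite <- hom_dom, <- hom_mul, <- H. reflexivity. Qed.

Lemma hom_compat s t : compat s t -> compat (f s) (f t).
Proof.
  intros [H1 H2]. split; rewrite <- hom_inv, <- hom_mul; apply hom_idem; assumption.
Qed.

End Hom.

Section Dist.
Context {S : invsg} (D : distributive (S:=S)).
Implicit Types a b c e f g j s t u x y : S.

Lemma join_ex a b : compat a b -> exists j, is_join j a b.
Proof. apply (proj1 D). Qed.

Lemma dist_l a b j c : compat a b -> is_join j a b -> is_join (c ** j) (c ** a) (c ** b).
Proof. intros H1 H2. apply (proj2 D a b j c H1 H2). Qed.

Lemma dist_r a b j c : compat a b -> is_join j a b -> is_join (j ** c) (a ** c) (b ** c).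
Proof. intros H1 H2. apply (proj2 D a b j c H1 H2). Qed.

Lemma join_idem j e f : idem e -> idem f -> is_join j e f -> idem j.
Proof.
  intros He Hf H.
  apply (leo_idem_idem j (dom j) (dom_idem j)).
  apply (join_least j e f).
  - exact H.
  - rewrite <- (idem_ran_dom e He). apply leo_dom_leo. apply (join_ub1 j e f H).
  - rewrite <- (idem_ran_dom f Hf). apply leo_dom_leo. apply (join_ub2 j e f H).
Qed.

Lemma idem_join_join j e f : idem e -> idem f -> idem_join j e f -> is_join j e f.
Proof.
  intros He Hf [Hj [H1 [H2 H3]]].
  destruct (join_ex e f (compat_idem e f He Hf)) as [j' Hj'].
  assert (idem j') by (apply (join_idem j' e f); assumption).
  assert (j = j').
  { apply leo_antisym.
    - apply H3; auto. apply (join_ub1 _ _ _ Hj'). apply (join_ub2 _ _ _ Hj').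
    - apply (join_least j' e f); auto. }
  subst. exact Hj'.
Qed.

Lemma idem_join_self0 e : idem e -> idem_join e e zero.
Proof.
  intros He. split. exact He. split. apply leo_refl. split. apply leo_zero.
  intros u _ H _. exact H.
Qed.

Lemma below_inv a j : leo a j -> inv j ** a = dom a.
Proof.
  intro H. pose proof H as H'. unfold leo in H'. rewrite H' at 1. rewrite mulA. fold (dom j).
  rewrite (idem_comm (dom j) (dom a)) by apply dom_idem. symmetry. apply leo_dom'.
  exact H.
Qed.

Lemma dom_join a b j : compat a b -> is_join j a b -> is_join (dom j) (dom a) (dom b).
Proof.
  intros Hc Hj. pose proof (dist_l a b j (inv j) Hc Hj) as H.
  rewrite (below_inv a j (join_ub1 _ _ _ Hj)), (below_inv b j (join_ub2 _ _ _ Hj)) in H.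
  exact H.
Qed.

Lemma join_sym j a b : is_join j a b -> is_join j b a.
Proof.
  intros H. split.
  - intros x [->| ->]. apply (join_ub2 _ _ _ H). apply (join_ub1 _ _ _ H).
  - intros u Hu. apply (join_least j a b); auto.
Qed.

Lemma join_0r z y : is_join z y zero -> y = z.
Proof. intro H. apply join_0l. apply join_sym. exact H. Qed.

Lemma join_unique j j' a b : is_join j a b -> is_join j' a b -> j = j'.
Proof. apply lub_unique. Qed.

Lemma diff_decomp a c g : leo c a -> idem g -> leo g (dom a) -> idem_join (dom a) (dom c) g ->
  is_join a c (a ** g).
Proof.
  intros Hca Hg Hga Hj.
  assert (Hag : leo (a ** g) a) by (apply leo_idem_r; exact Hg).
  pose proof (compat_below c (a ** g) a Hca Hag) as Hc.
  destruct (join_ex _ _ Hc) as [j Hjj].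
  pose proof (dom_join _ _ _ Hc Hjj) as Hd.
  rewrite dom_mul_idem in Hd by exact Hg.
  rewrite <- (leo_idem_eq g (dom a) (dom_idem a) Hga) in Hd.
  apply idem_join_join in Hj; [| apply dom_idem | exact Hg].
  pose proof (join_unique _ _ _ _ Hd Hj) as E.
  assert (Hja : leo j a) by (apply (join_least j c (a ** g)); auto).
  assert (j = a).
  { unfold leo in Hja. rewrite Hja. rewrite E. exact (eq_sym (leo_refl a)). }
  subst. exact Hjj.
Qed.

Lemma leo_idem_comm (h k : S) : idem h -> idem k -> leo (h ** k) k.
Proof.
  intros Hh Hk. rewrite (idem_comm h k Hh Hk). apply leo_idem_r. exact Hh.
Qed.

End Dist.

Section FinLub.
Context {S : invsg} (D : distributive (S:=S)).

Lemma fin_lub (a : S) (m : list S) : (forall y, In y m -> leo y a) ->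
  exists J, is_lub (fun y => In y m) J /\ leo J a /\
    forall (T : invsg) (f : S -> T), is_morphism f ->
      is_lub (fun y => exists z, In z m /\ y = f z) (f J).
Proof.
  induction m as [|x m IH]; intros Hm.
  - exists zero. split; [|split].
    + split. intros x []. intros u _. apply leo_zero.
    + apply leo_zero.
    + intros T f [Hf _]. rewrite (hom_zero f Hf). split.
      * intros y [z [[] _]].
      * intros u _. apply leo_zero.
  - destruct IH as [J [HJ [HJa HJf]]]. { intros y Hy. apply Hm. right. exact Hy. }
    assert (Hx : leo x a) by (apply Hm; left; reflexivity).
    pose proof (compat_below x J a Hx HJa) as Hc.
    destruct (join_ex D x J Hc) as [j Hj].
    exists j. split; [|split].
    + split.
      * intros y [<-|Hy]. apply (join_ub1 _ _ _ Hj).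
        apply (leo_trans _ J). apply (proj1 HJ); exact Hy. apply (join_ub2 _ _ _ Hj).
      * intros u Hu. apply (join_least j x J). exact Hj. apply Hu; left; reflexivity.
        apply (proj2 HJ). intros y Hy. apply Hu. right; exact Hy.
    + apply (join_least j x J); auto.
    + intros T f Hf. pose proof (HJf T f Hf) as HfJ.
      pose proof (proj2 Hf x J j Hc Hj) as Hfj.
      split.
      * intros y [z [[<-|Hz] ->]]. apply (join_ub1 _ _ _ Hfj).
        apply (leo_trans _ (f J)). apply (proj1 HfJ). exists z; auto. apply (join_ub2 _ _ _ Hfj).
      * intros u Hu. apply (join_least (f j) (f x) (f J)). exact Hfj.
        apply Hu. exists x. split; auto. left; reflexivity.
        apply (proj2 HfJ). intros y [z [Hz ->]]. apply Hu. exists z. split; auto. right; exact Hz.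
Qed.

End FinLub.

Section Eps.
Context {B : invsg} (D : distributive (S:=B)) (GB : gen_boolean_idem (S:=B)).
Context (J : B -> Prop) (HJ : additive_ideal J) (HJ0 : J zero).
Implicit Types a b c e f g j s t u x y : B.

Lemma J_r a s : J a -> J (a ** s).
Proof. intro H. apply (proj1 HJ a s H). Qed.
Lemma J_l a s : J a -> J (s ** a).
Proof. intro H. apply (proj1 HJ a s H). Qed.

Lemma compl_ex e f : idem e -> idem f -> leo f e ->
  exists g, idem g /\ leo g e /\ f ** g = zero /\ idem_join e f g.
Proof. intros. apply (proj2 (proj2 GB)); assumption. Qed.

Lemma L1 x y g : leo y x -> eps J x y -> idem g -> leo g (dom x) -> dom y ** g = zero ->
  J (x ** g).
Proof.
  intros Hyx Heps Hg Hgx Hyg.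
  destruct Heps as [c [p [q [Hcx [Hcy [Hdiff [_ [Hp _]]]]]]]].
  destruct Hdiff as [gc [Hgc [Hgcx [Hdc [Hjc ->]]]]].
  assert (E : g = g ** gc).
  { apply idem_join_join in Hjc; [| exact D | apply dom_idem | exact Hgc].
    pose proof (dist_l D _ _ _ g (compat_idem _ _ (dom_idem c) Hgc) Hjc) as H.
    assert (g ** dom c = zero).
    { rewrite (leo_dom' c y Hcy).
      rewrite (mulA g), (idem_comm g (dom c)) by (apply dom_idem || exact Hg).
      rewrite <- mulA, (idem_comm g (dom y)) by (apply dom_idem || exact Hg).
      rewrite Hyg, muls0. reflexivity. }
    rewrite H0 in H. apply join_0l in H. rewrite H.
    rewrite (idem_comm g (dom x)) by (apply dom_idem || exact Hg).
    apply leo_idem_eq. apply dom_idem. exact Hgx. }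
  rewrite E. rewrite (idem_comm g gc Hg Hgc), mulA. apply J_r. exact Hp.
Qed.

Lemma L2 x y g : leo y x -> idem g -> leo g (dom x) -> dom y ** g = zero ->
  idem_join (dom x) (dom y) g -> J (x ** g) -> eps J x y.
Proof.
  intros Hyx Hg Hgx Hyg Hj HJx.
  exists y, (x ** g), zero. split; [exact Hyx|]. split; [apply leo_refl|].
  split; [| split; [| split; [exact HJx | exact HJ0]]].
  - exists g. split; [exact Hg|]. split; [exact Hgx|]. split; [exact Hyg|]. split; [exact Hj| reflexivity].
  - exists zero. split; [apply idem_zero|]. split; [apply leo_zero|].
    split; [apply muls0|]. split; [apply idem_join_self0; apply dom_idem|].
    symmetry; apply muls0.
Qed.

Lemma Lkey a b j e : compat a b -> is_join j a b -> idem e ->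
  eps J a (a ** e) -> eps J b (b ** e) -> eps J j (j ** e).
Proof.
  intros Hab Hj He Ha Hb.
  assert (Haj : leo a j) by exact (join_ub1 _ _ _ Hj).
  assert (Hbj : leo b j) by exact (join_ub2 _ _ _ Hj).
  assert (Hcomp : forall x, leo x j -> eps J x (x ** e) -> exists gx, idem gx /\ leo gx (dom x) /\
            J (x ** gx) /\ is_join (dom x) (dom x ** e) gx /\ dom x ** e ** gx = zero).
  { intros x Hxj Hx.
    destruct (compl_ex (dom x) (dom x ** e) (dom_idem x) (idem_mul _ _ (dom_idem x) He)
                (leo_idem_r _ _ He)) as [gx [Hgx [Hgxx [H0 Hjx]]]].
    exists gx. split; [exact Hgx|]. split; [exact Hgxx|]. split.
    - apply (L1 x (x ** e)). apply leo_idem_r; exact He. exact Hx. exact Hgx. exact Hgxx.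
      rewrite dom_mul_idem by exact He. exact H0.
    - split; [| exact H0]. apply idem_join_join; auto. apply idem_mul; auto using dom_idem. }
  destruct (Hcomp a Haj Ha) as [ga [Hga [Hgaa [HJa [Hja Hga0]]]]].
  destruct (Hcomp b Hbj Hb) as [gb [Hgb [Hgbb [HJb [Hjb Hgb0]]]]].
  destruct (compl_ex (dom j) (dom j ** e) (dom_idem j) (idem_mul _ _ (dom_idem j) He)
                (leo_idem_r _ _ He)) as [gj [Hgj [Hgjj [Hgj0 Hjj]]]].
  destruct (join_ex D ga gb (compat_idem _ _ Hga Hgb)) as [G HG].
  assert (HGi : idem G) by (apply (join_idem G ga gb); assumption).
  pose proof (dom_join D a b j Hab Hj) as Hdj.
  assert (Egj : gj = gj ** dom j).
  { rewrite (idem_comm gj (dom j) Hgj (dom_idem j)). apply leo_idem_eq. apply dom_idem. exact Hgjj. }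
  assert (Hpart : forall x gx, leo x j -> idem gx -> is_join (dom x) (dom x ** e) gx ->
             leo (gj ** dom x) gx).
  { intros x gx Hxj Hgx Hjx.
    pose proof (dist_l D _ _ _ (gj ** dom x)
       (compat_idem _ _ (idem_mul _ _ (dom_idem x) He) Hgx) Hjx) as H.
    assert (E1 : gj ** dom x ** dom x = gj ** dom x) by (rewrite <- mulA, (dom_idem x); reflexivity).
    assert (E2 : gj ** dom x ** (dom x ** e) = zero).
    { rewrite (mulA (gj ** dom x)), <- (mulA gj), (dom_idem x).
      rewrite (leo_dom x j Hxj).
      rewrite !mulA.
      rewrite <- (mulA (gj ** dom j) (dom x) e), (idem_comm (dom x) e) by (apply dom_idem || exact He).
      rewrite mulA.
      rewrite <- (mulA gj (dom j) e), (idem_comm gj (dom j ** e)) by (exact Hgj || (apply idem_mul; [apply dom_idem | exact He])).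
      rewrite Hgj0, !mul0s. reflexivity. }
    rewrite E1, E2 in H. apply join_0l in H. rewrite <- H.
    apply leo_idem_comm. apply idem_mul; [exact Hgj | apply dom_idem]. exact Hgx. }
  assert (HgjG : leo gj G).
  { pose proof (dist_l D _ _ _ gj (compat_idem _ _ (dom_idem a) (dom_idem b)) Hdj) as H.
    rewrite <- Egj in H.
    apply (join_least gj (gj ** dom a) (gj ** dom b) G H).
    - apply (leo_trans _ ga). apply Hpart; assumption. apply (join_ub1 _ _ _ HG).
    - apply (leo_trans _ gb). apply Hpart; assumption. apply (join_ub2 _ _ _ HG). }
  apply leo_idem_eq in HgjG; [| exact HGi].
  apply (L2 j (j ** e) gj).
  - apply leo_idem_r; exact He.
  - exact Hgj.
  - exact Hgjj.
  - rewrite dom_mul_idem by exact He. exact Hgj0.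
  - rewrite dom_mul_idem by exact He. exact Hjj.
  - rewrite HgjG, mulA. apply J_r.
    pose proof (dist_l D _ _ _ j (compat_idem _ _ Hga Hgb) HG) as H.
    assert (Ea : j ** ga = a ** ga).
    { rewrite (leo_idem_eq ga (dom a) (dom_idem a) Hgaa) at 1. rewrite mulA.
      unfold leo in Haj. rewrite <- Haj. reflexivity. }
    assert (Eb : j ** gb = b ** gb).
    { rewrite (leo_idem_eq gb (dom b) (dom_idem b) Hgbb) at 1. rewrite mulA.
      unfold leo in Hbj. rewrite <- Hbj. reflexivity. }
    rewrite Ea, Eb in H.
    apply (proj2 HJ (a ** ga) (b ** gb)); auto.
    apply (compat_below _ _ j).
    + apply (leo_trans _ a). apply leo_idem_r; exact Hga. exact Haj.
    + apply (leo_trans _ b). apply leo_idem_r; exact Hgb. exact Hbj.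
Qed.

End Eps.

Lemma nu_morph {B TS : invsg} (D : distributive (S:=B)) (GB : gen_boolean_idem (S:=B))
  (J : B -> Prop) (HJ : additive_ideal J) (HJ0 : J zero)
  (nu : B -> TS) (hTS : distributive (S:=TS)) (hnu : is_hom nu)
  (hsurj : forall t : TS, exists b, nu b = t)
  (hker : forall a b : B, nu a = nu b <-> eps J a b) : is_morphism nu.
Proof.
  split. exact hnu. intros a b j Hab Hj.
  assert (Haj : leo a j) by exact (join_ub1 _ _ _ Hj).
  assert (Hbj : leo b j) by exact (join_ub2 _ _ _ Hj).
  pose proof (hom_compat nu hnu a b Hab) as Hc'.
  destruct (join_ex hTS _ _ Hc') as [k Hk].
  assert (Hkj : leo k (nu j)).
  { apply (join_least k (nu a) (nu b)). exact Hk. apply hom_leo; auto. apply hom_leo; auto. }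
  destruct (hsurj k) as [w Hw].
  assert (Ek : k = nu (j ** dom w)).
  { rewrite (hom_mul nu hnu), (hom_dom nu hnu), Hw. exact Hkj. }
  assert (Hsub : forall x, leo x j -> leo (nu x) k -> nu x = nu (x ** dom w)).
  { intros x Hxj Hxk. unfold leo in Hxk. rewrite Hxk at 1.
    rewrite Ek, <- (hom_dom nu hnu), <- (hom_mul nu hnu). f_equal.
    rewrite <- mulA, (idem_comm (dom w) (dom x)) by apply dom_idem.
    rewrite mulA. unfold leo in Hxj. rewrite <- Hxj. reflexivity. }
  assert (Ea : eps J a (a ** dom w)).
  { apply hker. apply Hsub. exact Haj. exact (join_ub1 _ _ _ Hk). }
  assert (Eb : eps J b (b ** dom w)).
  { apply hker. apply Hsub. exact Hbj. exact (join_ub2 _ _ _ Hk). }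
  pose proof (Lkey D GB J HJ HJ0 a b j (dom w) Hab Hj (dom_idem w) Ea Eb) as Ej.
  apply hker in Ej. rewrite <- Ek in Ej. rewrite Ej. exact Hk.
Qed.

From Stdlib Require Import IndefiniteDescription.

Theorem theorem1p3 (S B : invsg) (beta : S -> B) (hbeta : is_booleanization beta)
  (TS : invsg) (nu : B -> TS) (hTS : boolean TS) (hnu : is_hom nu)
  (hsurj : forall t : TS, exists b, nu b = t)
  (hker : forall a b : B, nu a = nu b <-> eps (CK_ideal beta) a b) :
  cover_to_join (fun s => nu (beta s)) /\
  (forall T : invsg, boolean T -> forall theta : S -> T, cover_to_join theta ->
     unique_factor (fun s => nu (beta s)) theta).
Proof.
  destruct hbeta as [[DB GB] [hb [hinj huniv]]].
  destruct hTS as [DTS GTS].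
  set (I := CK_ideal beta).
  assert (HI : additive_ideal I).
  { split.
    - intros a s Ha. split; intros J HJ Hg.
      + exact (proj1 (proj1 HJ a s (Ha J HJ Hg))).
      + exact (proj2 (proj1 HJ a s (Ha J HJ Hg))).
    - intros a b j Ha Hb Hc Hj J HJ Hg. exact (proj2 HJ a b j (Ha J HJ Hg) (Hb J HJ Hg) Hc Hj). }
  assert (HIgen : forall y, CK_gen beta y -> I y) by (intros y Hy J HJ Hg; apply Hg; exact Hy).
  assert (HI0 : I zero).
  { apply HIgen. exists zero, nil, zero. split; [|split].
    - split. intros x []. intros x Hx Hle. exfalso. apply Hx. apply leo_zero_r. exact Hle.
    - split. intros y [z [[] _]]. intros u _. apply leo_zero.
    - rewrite (hom_zero beta hb). exists zero. split. apply idem_zero. split. apply leo_zero.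
      split. apply muls0. split. rewrite dom_zero. apply idem_join_self0. apply idem_zero.
      symmetry. apply muls0. }
  pose proof (nu_morph DB GB I HI HI0 nu DTS hnu hsurj hker) as Hnu.
  assert (Htau : is_hom (fun s => nu (beta s))).
  { split. intros a b. rewrite (hom_mul beta hb), (hom_mul nu hnu). reflexivity.
    rewrite (hom_zero beta hb), (hom_zero nu hnu). reflexivity. }
  assert (Hcov : forall a l, cover a l -> exists Jl,
     is_lub (fun y => exists z, In z l /\ y = beta z) Jl /\ leo Jl (beta a) /\
     forall (T : invsg) (f : B -> T), is_morphism f ->
       is_lub (fun y => exists z, In z l /\ y = f (beta z)) (f Jl)).
  { intros a l [Hl _].
    destruct (fin_lub DB (beta a) (map beta l)) as [Jl [H1 [H2 H3]]].
    { intros y Hy. apply in_map_iff in Hy. destruct Hy as [z [<- Hz]].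
      apply (hom_leo beta hb). apply Hl. exact Hz. }
    exists Jl. split; [|split; [exact H2|]].
    - apply (lub_ext (fun y => In y (map beta l))); [|exact H1]. intro y. rewrite in_map_iff. split.
      + intros [z [<- Hz]]. exists z. auto.
      + intros [z [Hz ->]]. exists z. auto.
    - intros T f Hf. apply (lub_ext (fun y => exists z, In z (map beta l) /\ y = f z)); [|exact (H3 T f Hf)]. intro y. split.
      + intros [z [Hz ->]]. apply in_map_iff in Hz. destruct Hz as [x [<- Hx]]. exists x. auto.
      + intros [z [Hz ->]]. exists (beta z). split; auto. apply in_map; exact Hz. }
  assert (Hcovnu : forall a l Jl, cover a l ->
     is_lub (fun y => exists z, In z l /\ y = beta z) Jl -> leo Jl (beta a) ->
     nu (beta a) = nu Jl).
  { intros a l Jl Hc HJl HJa. apply hker.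
    destruct (compl_ex GB (dom (beta a)) (dom Jl) (dom_idem _) (dom_idem _) (leo_dom_leo _ _ HJa))
      as [g [Hg [Hga [Hg0 Hgj]]]].
    apply (L2 I HI0 (beta a) Jl g HJa Hg Hga Hg0 Hgj). apply HIgen.
    exists a, l, Jl. split; [exact Hc|]. split; [exact HJl|].
    exists g. split; [exact Hg|]. split; [exact Hga|]. split; [exact Hg0|]. split; [exact Hgj|reflexivity]. }
  split.
  - split. exact Htau. intros a l Hc.
    destruct (Hcov a l Hc) as [Jl [H1 [H2 H3]]].
    rewrite (Hcovnu a l Jl Hc H1 H2). apply (H3 TS nu Hnu).
  - intros T [DT GT] theta [Hth Hthc].
    destruct (huniv T (conj DT GT) theta Hth) as [th2 [Hth2 [Hext Huniq]]].
    assert (Hkill : forall x, I x -> th2 x = zero).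
    { intros x Hx. apply Hx.
      - split.
        + intros a s Ha. rewrite !(hom_mul th2 (proj1 Hth2)), Ha. split; [apply muls0 | apply mul0s].
        + intros a b j Ha Hb Hc Hj. pose proof (proj2 Hth2 a b j Hc Hj) as H.
          rewrite Ha, Hb in H. symmetry. exact (join_0l _ _ H).
      - intros y [a [l [j [Hc [Hj Hd]]]]].
        destruct Hd as [g [Hg [Hga [Hg0 [Hgj ->]]]]].
        destruct (Hcov a l Hc) as [Jl [H1 [H2 H3]]].
        assert (j = Jl) by exact (lub_unique _ j Jl Hj H1). subst j.
        assert (Eth : th2 Jl = theta a).
        { apply (lub_unique (fun y => exists z, In z l /\ y = theta z)).
          - apply (lub_ext (fun y => exists z, In z l /\ y = th2 (beta z))); [|exact (H3 T th2 Hth2)]. intro y. split.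
            + intros [z [Hz ->]]. exists z. rewrite Hext. auto.
            + intros [z [Hz ->]]. exists z. rewrite Hext. auto.
          - apply Hthc. exact Hc. }
        rewrite (hom_mul th2 (proj1 Hth2)), Hext.
        transitivity (theta a ** dom (theta a) ** th2 g).
        { f_equal. apply leo_refl. }
        rewrite <- Eth, <- (hom_dom th2 (proj1 Hth2)), <- mulA, <- (hom_mul th2 (proj1 Hth2)), Hg0.
        rewrite (hom_zero th2 (proj1 Hth2)). apply muls0. }
    assert (Hresp : forall a b, eps I a b -> th2 a = th2 b).
    { intros a b [c [p [q [Hca [Hcb [Hp [Hq [HIp HIq]]]]]]]].
      assert (H : forall x y, leo c x -> is_diff y x c -> I y -> th2 x = th2 c).
      { intros x y Hcx [g [Hg [Hgx [_ [Hgj ->]]]]] HIy.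
        pose proof (diff_decomp DB x c g Hcx Hg Hgx Hgj) as Hd.
        pose proof (proj2 Hth2 c (x ** g) x
                      (compat_below c (x ** g) x Hcx (leo_idem_r _ _ Hg)) Hd) as H.
        rewrite (Hkill _ HIy) in H. apply join_0r in H. symmetry; exact H. }
      rewrite (H a p Hca Hp HIp), (H b q Hcb Hq HIq). reflexivity. }
    set (pick := fun t => proj1_sig (constructive_indefinite_description _ (hsurj t))).
    assert (Hpick : forall t, nu (pick t) = t)
      by (intro t; exact (proj2_sig (constructive_indefinite_description _ (hsurj t)))).
    set (th3 := fun t => th2 (pick t)).
    assert (Hth3 : forall b, th3 (nu b) = th2 b).
    { intro b. apply Hresp. apply hker. apply Hpick. }
    exists th3. split; [|split].
    + split; [split|].
      * intros x y. destruct (hsurj x) as [p <-]. destruct (hsurj y) as [q <-].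
        rewrite <- (hom_mul nu hnu), !Hth3. apply (hom_mul th2 (proj1 Hth2)).
      * rewrite <- (hom_zero nu hnu), Hth3. apply (hom_zero th2 (proj1 Hth2)).
      * intros t1 t2 k Hc Hk.
        destruct (hsurj k) as [w Hw]. destruct (hsurj t1) as [p1 Hp1].
        destruct (hsurj t2) as [p2 Hp2].
        assert (E1 : t1 = nu (w ** dom p1)).
        { pose proof (join_ub1 _ _ _ Hk) as H. unfold leo in H.
          rewrite (hom_mul nu hnu), (hom_dom nu hnu), Hw, Hp1. exact H. }
        assert (E2 : t2 = nu (w ** dom p2)).
        { pose proof (join_ub2 _ _ _ Hk) as H. unfold leo in H.
          rewrite (hom_mul nu hnu), (hom_dom nu hnu), Hw, Hp2. exact H. }
        assert (Hc' : compat (w ** dom p1) (w ** dom p2))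
          by (apply (compat_below _ _ w); apply leo_idem_r; apply dom_idem).
        destruct (join_ex DB _ _ Hc') as [j Hj].
        pose proof (proj2 Hnu _ _ _ Hc' Hj) as Hnj. rewrite <- E1, <- E2 in Hnj.
        assert (Ej : nu j = k) by exact (join_unique _ _ _ _ Hnj Hk).
        rewrite <- Ej, E1, E2, !Hth3. apply (proj2 Hth2 _ _ _ Hc' Hj).
    + intro s. rewrite Hth3. apply Hext.
    + intros th4 Hth4 Hext4 x.
      assert (Hcomp : is_morphism (fun b => th4 (nu b))).
      { split; [split|].
        - intros a b. rewrite (hom_mul nu hnu), (hom_mul th4 (proj1 Hth4)). reflexivity.
        - rewrite (hom_zero nu hnu), (hom_zero th4 (proj1 Hth4)). reflexivity.
        - intros a b j Hc Hj. apply (proj2 Hth4). apply (hom_compat nu hnu); exact Hc.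
          apply (proj2 Hnu); assumption. }
      destruct (hsurj x) as [b <-]. rewrite Hth3. apply (Huniq _ Hcomp Hext4).
Qed.
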